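(* Let $(\mathcal S,\mathcal A,P,R,d_0)$ be a finite episodic MDP with horizon $T$ and $\pi_\theta$ a parameterized policy as described in the context. Let $\theta_0\in\mathbb R^n$ and let $(\theta_i)$ be generated by $$\theta_{i+1}=\theta_i+\alpha_i\,\hat\nabla(\theta_i,\gamma_i),$$ where for all $i$ the step size $\alpha_i>0$, the discount factor $\gamma_i\in[0,1]$, and $$\sum_{i=0}^\infty\alpha_i=\infty,\qquad\sum_{i=0}^\infty\alpha_i^2<\infty,\qquad \alpha_i\ge c(1-\gamma_i)$$ for some constant $c>0$. Then $J(\theta_i)$ converges to a finite value and $\lim_{i\to\infty}\nabla J(\theta_i)=0$. Furthermore, every limit point of $(\theta_i)$ is a stationary point of $J$.
   Context: Setting: $\mathcal S$ is a finite set of states, $\mathcal A$ a finite set of actions, $P(s'\mid s,a)$ a transition function, $R(\cdot\mid s,a,s')$ a reward distribution supported in $[-R_{\max},R_{\max}]$, and $d_0$ an initial state distribution. There is a terminal absorbing state in which the agent stays and receives reward $0$. An episode: $S_0\sim d_0$; at each time $t$, $A_t\sim\pi_\theta(\cdot\mid S_t)$, $S_{t+1}\sim P(\cdot\mid S_t,A_t)$, $R_t\sim R(\cdot\mid S_t,A_t,S_{t+1})$; the horizon $T$ is fixed and $S_T$ is terminal. The policy $\pi_\theta(a\mid s)$ is positive and differentiable in $\theta\in\mathbb R^n$, there is a constant $L_\pi$ with $\big\|\frac{\partial}{\partial\theta}\ln\pi_\theta(a\mid s)\big\|\le L_\pi$ for all $\theta,s,a$, and the parameterization is such that $J$ is continuously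 differentiable on $\mathbb R^n$ with Lipschitz continuous gradient. Expectations are under $\pi=\pi_\theta$. Objective: $J(\theta)=\mathbb E\big[\sum_{t=0}^{T-1}R_t\big]$. For $\gamma\in[0,1]$ (with $0^0=1$), the discounted action-value function is $Q^{\pi_\theta}_\gamma(s,a)=\mathbb E\big[\sum_{i=t}^{T}\gamma^{i-t}R_i\,\big|\,S_t=s,A_t=a\big]$ (treated as a function of $(s,a)$ only, i.e. not depending on $t$, e.g. because time is encoded in the state). The discounted approximation of the policy gradient is $$\hat\nabla(\theta,\gamma)=\mathbb E\Big[\sum_{t=0}^{T-1}Q^{\pi_\theta}_\gamma(S_t,A_t)\,\frac{\partial}{\partial\theta}\ln\pi_\theta(A_t\mid S_t)\Big].$$ *)

(* Defs.v *)
From HB Require Import structures.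
From mathcomp Require Import all_boot all_order all_algebra.
From mathcomp Require Import all_classical all_reals all_analysis.
Set Implicit Arguments. Unset Strict Implicit. Unset Printing Implicit Defensive.
Import Order.TTheory GRing.Theory Num.Theory.
Import numFieldNormedType.Exports.
Local Open Scope ring_scope.

Section PG.
Variables (R : realType) (S A : finType) (n T : nat).

Definition grad (f : 'rV[R]_n -> R) (x : 'rV[R]_n) : 'rV[R]_n :=
  \row_(j < n) 'D_(delta_mx 0 j) f x.

Variables (P : S -> A -> S -> R)
          (r : S -> A -> S -> R)      (* mean reward E[R | s,a,s'] *)
          (d0 : S -> R)
          (pi : 'rV[R]_n -> S -> A -> R).

Fixpoint state_dist (th : 'rV[R]_n) (t : nat) (s : S) : R :=
  match t with
  | 0 => d0 s
  | t'.+1 => \sum_(s0 : S) \sum_(a0 : A)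
               state_dist th t' s0 * pi th s0 a0 * P s0 a0 s
  end.

(* Qsteps k th g s a = E[ sum_{j=0}^{k-1} g^j R_{t+j} | S_t = s, A_t = a ] *)
Fixpoint Qsteps (k : nat) (th : 'rV[R]_n) (g : R) (s : S) (a : A) : R :=
  match k with
  | 0 => 0
  | k'.+1 => \sum_(s' : S) P s a s' *
               (r s a s' + g * \sum_(a' : A) pi th s' a' * Qsteps k' th g s' a')
  end.

(* Q^{pi_theta}_gamma(s,a) at time t: E[ sum_{i=t}^{T} g^(i-t) R_i | S_t=s, A_t=a ] *)
Definition Qgamma (th : 'rV[R]_n) (g : R) (t : nat) (s : S) (a : A) : R :=
  Qsteps (T - t).+1 th g s a.

Definition Jobj (th : 'rV[R]_n) : R :=
  \sum_(t < T) \sum_(s : S) \sum_(a : A) \sum_(s' : S)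
     state_dist th t s * pi th s a * P s a s' * r s a s'.

Definition gradhat (th : 'rV[R]_n) (g : R) : 'rV[R]_n :=
  \sum_(t < T) \sum_(s : S) \sum_(a : A)
     (state_dist th t s * pi th s a * Qgamma th g t s a)
       *: grad (fun th' => ln (pi th' s a)) th.

End PG.

(* Main.v *)
Require Import Defs.
From HB Require Import structures.
From mathcomp Require Import all_boot all_order all_algebra.
From mathcomp Require Import all_classical all_reals all_analysis.
From mathcomp Require Import ring lra.
Import Order.TTheory GRing.Theory Num.Theory.
Import numFieldNormedType.Exports.
Local Open Scope ring_scope.
Local Open Scope classical_set_scope.
Set Implicit Arguments. Unset Strict Implicit. Unset Printing Implicit Defensive.
Section Aux.
Variable R : realType.

Lemma entry_le_norm n (v : 'rV[R]_n) j : `|v ord0 j| <= `|v|.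
Proof.
rewrite [leRHS]/Num.norm /= mx_normrE.
by apply: (@le_bigmax_cond _ _ _ _ (ord0, j)).
Qed.

Lemma norm_le_entries n (v : 'rV[R]_n) e : 0 <= e ->
  (forall j, `|v ord0 j| <= e) -> `|v| <= e.
Proof.
move=> e0 H; rewrite [leLHS]/Num.norm /= mx_normrE.
apply/bigmax_leP; split => // -[i j] _ /=.
by rewrite (ord1 i).
Qed.

Lemma norm_lt_entries n (v : 'rV[R]_n) e : 0 < e ->
  (forall j, `|v ord0 j| < e) -> `|v| < e.
Proof.
move=> e0 H; rewrite [ltLHS]/Num.norm /= mx_normrE.
apply/bigmax_ltP; split => // -[i j] _ /=.
by rewrite (ord1 i).
Qed.

Lemma quasi_mono_cvg (u w : nat -> R) m Bw :
  (forall i, m <= u i) -> (forall i, 0 <= w i) ->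
  (forall N, \sum_(i < N) w i <= Bw) ->
  (forall i, u i.+1 <= u i + w i) -> cvgn u.
Proof.
move=> um w0 wB uw.
pose s N := \sum_(i < N) w i.
pose v N := u N - s N.
have -> : u = v + s by apply/funext => N; rewrite /v /= subrK.
apply: is_cvgD.
  apply: nonincreasing_is_cvgn.
    apply/nonincreasing_seqP => N; rewrite /v /s big_ord_recr /=.
    have := uw N; lra.
  exists (m - Bw) => _ [N _ <-]; rewrite /v.
  have := um N; have := wB N; rewrite /s; lra.
apply: nondecreasing_is_cvgn.
  apply/nondecreasing_seqP => N; rewrite /s big_ord_recr /=.
  have := w0 N; lra.
by exists Bw => _ [N _ <-]; exact: wB.
Qed.

End Aux.
Section Desc.
Variable R : realType.
Variable n : nat.
Implicit Types (J : 'rV[R]_n -> R) (x v : 'rV[R]_n).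

Lemma line_fun_eq J x v t :
  (fun h : R => h^-1 *: (((fun s : R => J (x + s *: v)) \o shift t) (h *: 1)
       - J (x + t *: v))) =
  (fun h : R => h^-1 *: ((J \o shift (x + t *: v)) (h *: v) - J (x + t *: v))).
Proof.
apply/funext => h /=; congr (_ *: (J _ - _)).
by rewrite /shift /= [h *: 1]mulr1 scalerDl addrCA.
Qed.

Lemma line_is_derive J x v t : derivable J (x + t *: v) v ->
  is_derive t 1 (fun s => J (x + s *: v)) ('D_v J (x + t *: v)).
Proof.
move=> dJ; split.
  by rewrite /derivable line_fun_eq.
by rewrite /derive line_fun_eq.
Qed.

Lemma derive_grad J y v : differentiable J y ->
  'D_v J y = \sum_(j < n) v ord0 j * grad J y ord0 j.
Proof.
move=> dJ; rewrite deriveE // {1}(row_sum_delta v) linear_sum.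
apply: eq_bigr => j _; rewrite linearZ /= /grad mxE deriveE //.
Qed.

Lemma descent J L x v : (forall th, differentiable J th) ->
  (forall th th', `|grad J th - grad J th'| <= L * `|th - th'|) ->
  J x + \sum_(j < n) v ord0 j * grad J x ord0 j - n%:R * `|L| * `|v| ^+ 2
    <= J (x + v).
Proof.
move=> dJ HL.
pose phi := fun s : R => J (x + s *: v).
have dphi : forall t : R, is_derive t 1 phi ('D_v J (x + t *: v)).
  by move=> t; apply: line_is_derive; apply: diff_derivable.
have [xi xi01 Hm] := @MVT R phi (fun t => 'D_v J (x + t *: v)) 0 1 ltr01
  (fun t _ => dphi t)
  (derivable_within_continuous (fun t _ => @ex_derive _ _ _ _ _ _ _ (dphi t))).
move: Hm; rewrite /phi scale1r scale0r addr0 subr0 mulr1 => Hm.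
have -> : J (x + v) = J x + 'D_v J (x + xi *: v) by rewrite -Hm; ring.
rewrite -addrA lerD2l derive_grad //.
rewrite lerBlDr -lerBlDl -sumrB.
have xi0 : 0 <= xi by move: xi01; rewrite in_itv /= => /andP[/ltW].
have xi1 : xi <= 1 by move: xi01; rewrite in_itv /= => /andP[_ /ltW].
have Hz : `|grad J x - grad J (x + xi *: v)| <= `|L| * `|v|.
  apply: (le_trans (HL _ _)); apply: (le_trans (ler_norm _)).
  rewrite normrM normr_id ler_wpM2l //.
  rewrite opprD addrA subrr sub0r normrN normrZ.
  by rewrite ger0_norm // -[leRHS]mul1r ler_wpM2r.
apply: le_trans (ler_norm _) _; apply: le_trans (ler_norm_sum _ _ _) _.
have -> : n%:R * `|L| * `|v| ^+ 2 = \sum_(j < n) (`|L| * `|v| ^+ 2).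
  by rewrite sumr_const card_ord -[in RHS]mulr_natl mulrA.
apply: ler_sum => j _; rewrite -mulrBr normrM.
have h1 := entry_le_norm v j.
have h2 : `|grad J x ord0 j - grad J (x + xi *: v) ord0 j| <= `|L| * `|v|.
  by apply: le_trans Hz; have := entry_le_norm (grad J x - grad J (x + xi *: v)) j; rewrite !mxE.
apply: (le_trans (ler_pM _ _ h1 h2)) => //.
by rewrite expr2 mulrCA.
Qed.
End Desc.
Section Conv.
Variable R : realType.

Lemma sqr_norm (x : R) : `|x| ^+ 2 = x ^+ 2.
Proof. exact: real_normK (num_real x). Qed.

Lemma entry_sub m (A B : 'rV[R]_m) j : (A - B) ord0 j = A ord0 j - B ord0 j.
Proof. by rewrite !mxE. Qed.

Lemma series_bound (a : nat -> R) : (forall i, 0 <= a i) ->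
  cvg ([series a i]_i @ \oo) -> exists S, forall N, \sum_(i < N) a i <= S.
Proof.
move=> a0 ca; exists (limn [series a i]_i) => N.
have nd : nondecreasing_seq [series a i]_i.
  apply/nondecreasing_seqP => k; rewrite /series /= big_nat_recr //=.
  by rewrite lerDl.
have := nondecreasing_cvgn_le nd ca N.
by rewrite /series /= big_mkord.
Qed.

Variable n : nat.

Lemma abstract_conv (J : 'rV[R]_n -> R) (d : nat -> 'rV[R]_n) (alpha : nat -> R)
  (theta : nat -> 'rV[R]_n) M G B L :
  (forall th, differentiable J th) ->
  (forall th th', `|grad J th - grad J th'| <= L * `|th - th'|) ->
  (forall th, `|J th| <= M) ->
  (forall th, `|grad J th| <= G) ->
  (forall i, `|d i| <= G) ->
  (forall i, `|d i - grad J (theta i)| <= B * alpha i) ->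
  (forall i, theta i.+1 = theta i + alpha i *: d i) ->
  (forall i, 0 < alpha i) ->
  [series alpha i]_i @ \oo --> +oo ->
  cvg ([series alpha i ^+ 2]_i @ \oo) ->
  cvgn (fun i => J (theta i)) /\ grad J (theta i) @[i --> \oo] --> (0 : 'rV[R]_n).
Proof.
move=> dJ HL HM HG Hd He Hth a0 adiv a2cv.
pose g i := grad J (theta i).
pose q i := \sum_(j < n) g i ord0 j ^+ 2.
have G0 : 0 <= G by apply: le_trans (HG 0).
have B0 : 0 <= B.
  have h3 := le_trans (normr_ge0 _) (He 0%N).
  by rewrite pmulr_lge0 in h3.
have q0 : forall i, 0 <= q i by move=> i; apply: sumr_ge0 => j _; exact: sqr_ge0.
have gj : forall i j, `|g i ord0 j| <= G.
  by move=> i j; exact: le_trans (entry_le_norm _ _) (HG _).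
have qG : forall i, q i <= n%:R * G ^+ 2.
  move=> i; have -> : n%:R * G ^+ 2 = \sum_(j < n) G ^+ 2.
    by rewrite sumr_const card_ord mulr_natl.
  apply: ler_sum => j _; rewrite -[g i ord0 j ^+ 2]sqr_norm.
  have := gj i j; have := normr_ge0 (g i ord0 j); nra.
pose K := n%:R * G * B + n%:R * `|L| * G ^+ 2.
have K0 : 0 <= K.
  by apply: addr_ge0; apply: mulr_ge0 => //; apply: mulr_ge0 => //.
have step : forall i, J (theta i) + alpha i * q i - K * alpha i ^+ 2 <= J (theta i.+1).
  move=> i; have D := descent (theta i) (alpha i *: d i) dJ HL.
  rewrite -Hth in D; apply: le_trans D.
  have E : \sum_(j < n) (alpha i *: d i) ord0 j * grad J (theta i) ord0 j =
      alpha i * q i + alpha i * \sum_(j < n) ((d i - g i) ord0 j * g i ord0 j).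
    rewrite /q !mulr_sumr -big_split /=; apply: eq_bigr => j _.
    rewrite !mxE /g; ring.
  have Eb : `|\sum_(j < n) ((d i - g i) ord0 j * g i ord0 j)| <=
      n%:R * (B * alpha i) * G.
    apply: le_trans (ler_norm_sum _ _ _) _.
    have -> : n%:R * (B * alpha i) * G = \sum_(j < n) (B * alpha i * G).
      by rewrite sumr_const card_ord -[in RHS]mulr_natl; ring.
    apply: ler_sum => j _; rewrite normrM; apply: ler_pM => //.
      exact: le_trans (entry_le_norm _ _) (He i).
  have Nv : `|alpha i *: d i| ^+ 2 <= alpha i ^+ 2 * G ^+ 2.
    rewrite normrZ gtr0_norm // exprMn; apply: ler_wpM2l; first exact: sqr_ge0.
    have := Hd i; have := normr_ge0 (d i); nra.
  rewrite E.
  set S := \sum_(j < n) _ in Eb *.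
  have h1 : - (n%:R * (B * alpha i) * G) <= S by move: Eb; rewrite ler_norml => /andP[].
  have h2 : alpha i * (- (n%:R * (B * alpha i) * G)) <= alpha i * S.
    by apply: ler_wpM2l => //; apply: ltW.
  have h3 : n%:R * `|L| * `|alpha i *: d i| ^+ 2 <= n%:R * `|L| * (alpha i ^+ 2 * G ^+ 2).
    by apply: ler_wpM2l => //; apply: mulr_ge0.
  rewrite /K; move: h2 h3; set a := alpha i; set NN := n%:R; set V := `|_| ^+ 2.
  move=> h2 h3. nra.
have sumstep : forall N, \sum_(i < N) alpha i * q i <=
    J (theta N) - J (theta 0%N) + K * \sum_(i < N) alpha i ^+ 2.
  elim=> [|N IH]; first by rewrite !big_ord0 subrr mulr0 addr0.
  rewrite !big_ord_recr /= mulrDr; have := step N; lra.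
have [S2 HS2] := series_bound (fun i => sqr_ge0 (alpha i)) a2cv.
have sumbound : forall N, \sum_(i < N) alpha i * q i <= 2 * M + K * S2.
  move=> N; apply: le_trans (sumstep N) _.
  have := HM (theta N); have := HM (theta 0%N); rewrite !ler_norml.
  move=> /andP[h1 h2] /andP[h3 h4].
  have : K * \sum_(i < N) alpha i ^+ 2 <= K * S2 by apply: ler_wpM2l.
  lra.
have aq0 : forall i, 0 <= alpha i * q i by move=> i; apply: mulr_ge0 => //; apply: ltW.
split.
  have : cvgn (fun i => - J (theta i)).
    apply: (@quasi_mono_cvg _ _ (fun i => K * alpha i ^+ 2) (- M) (K * S2)).
    - by move=> i; rewrite lerN2; have := HM (theta i); rewrite ler_norml => /andP[].
    - by move=> i; apply: mulr_ge0 => //; exact: sqr_ge0.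
    - by move=> N; rewrite -mulr_sumr; apply: ler_wpM2l.
    - by move=> i; have := step i; have := aq0 i; lra.
  move/is_cvgN.
  by have -> : - (fun i => - J (theta i)) = (fun i => J (theta i))
    by apply/funext => i /=; rewrite opprK.
pose C := n%:R * (2 * G) * (`|L| * G).
have C0 : 0 <= C.
  apply: mulr_ge0; first by apply: mulr_ge0 => //; apply: mulr_ge0.
  exact: mulr_ge0.
have dq : forall i, q i.+1 - q i <= C * alpha i.
  move=> i; rewrite /q -sumrB.
  have dg : `|g i.+1 - g i| <= `|L| * G * alpha i.
    rewrite /g; apply: le_trans (HL _ _) _.
    apply: le_trans (ler_wpM2r (normr_ge0 _) (ler_norm L)) _.
    rewrite Hth addrAC subrr add0r normrZ gtr0_norm // -mulrA ler_wpM2l //.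
    rewrite mulrC ler_wpM2r //; exact: ltW.
  have -> : C * alpha i = \sum_(j < n) (`|L| * G * alpha i * (2 * G)).
    by rewrite sumr_const card_ord -[in RHS]mulr_natl /C; ring.
  apply: ler_sum => j _.
  set a := g i.+1 ord0 j; set b := g i ord0 j.
  have -> : a ^+ 2 - b ^+ 2 = (a - b) * (a + b) by ring.
  apply: le_trans (ler_norm _) _; rewrite normrM; apply: ler_pM => //.
    have := entry_le_norm (g i.+1 - g i) j; rewrite entry_sub => h.
    exact: le_trans h dg.
  apply: le_trans (ler_normD _ _) _; have -> : 2 * G = G + G by ring.
  by apply: lerD; [exact: gj | exact: gj].
pose u i := q i ^+ 2.
pose w i := C * alpha i * (2 * q i) + C ^+ 2 * alpha i ^+ 2.
have cu : cvgn u.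
  apply: (@quasi_mono_cvg _ _ w 0 (2 * C * (2 * M + K * S2) + C ^+ 2 * S2)).
  - by move=> i; exact: sqr_ge0.
  - move=> i; apply: addr_ge0; last by apply: mulr_ge0; exact: sqr_ge0.
    apply: mulr_ge0; first by apply: mulr_ge0 => //; exact: ltW.
    by apply: mulr_ge0 => //.
  - move=> N; rewrite /w big_split /= -!mulr_sumr.
    have -> : \sum_(i < N) C * alpha i * (2 * q i) = 2 * C * \sum_(i < N) alpha i * q i.
      by rewrite mulr_sumr; apply: eq_bigr => i _; ring.
    apply: lerD; apply: ler_wpM2l.
    + by apply: mulr_ge0.
    + exact: sumbound.
    + exact: sqr_ge0.
    + exact: HS2.
  - move=> i; rewrite /u /w.
    have h1 := dq i; have h2 := q0 i; have h3 := q0 i.+1.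
    have h4 : (q i.+1 - q i) * (q i.+1 + q i) <= C * alpha i * (q i.+1 + q i).
      by apply: ler_wpM2r => //; apply: addr_ge0.
    have h5 : C * alpha i * (q i.+1 + q i) <= C * alpha i * (2 * q i + C * alpha i).
      apply: ler_wpM2l; first by apply: mulr_ge0 => //; exact: ltW.
      lra.
    have -> : q i.+1 ^+ 2 = q i ^+ 2 + (q i.+1 - q i) * (q i.+1 + q i) by ring.
    have -> : C * alpha i * (2 * q i) + C ^+ 2 * alpha i ^+ 2 =
      C * alpha i * (2 * q i + C * alpha i) by ring.
    lra.
have l0 : 0 <= limn u.
  by apply: limr_ge => //; apply: nearW => i; exact: sqr_ge0.
have lz : limn u = 0.
  apply/eqP; rewrite eq_le l0 andbT; rewrite leNgt; apply/negP => lpos.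
  set l := limn u in l0 lpos.
  have Hu : u @ \oo --> l := cu.
  have lh : l / 2 < l by lra.
  have [N0 _ HN0] := cvgr_gt l Hu (l / 2) lh.
  pose Q1 := n%:R * G ^+ 2 + 1.
  have Q10' : 0 < Q1.
    rewrite /Q1; have : 0 <= n%:R * G ^+ 2 by apply: mulr_ge0 => //; exact: sqr_ge0.
    lra.
  pose dl := l / (2 * Q1).
  have dl0 : 0 < dl by rewrite /dl divr_gt0 //; lra.
  have dlQ : dl * Q1 = l / 2 by rewrite /dl; field; lra.
  have qd : forall i, (N0 <= i)%N -> dl <= q i.
    move=> i /HN0; rewrite /u => hi.
    have h1 := qG i; have h2 := q0 i.
    have h3 : q i * q i <= q i * Q1 by apply: ler_wpM2l => //; rewrite /Q1; lra.
    rewrite -(ler_pM2r Q10') dlQ; move: hi; rewrite expr2; lra.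
  have [N1 _ HN1] := (proj1 (cvgryPge _)) adiv
    ([series alpha i]_i N0 + (2 * M + K * S2 + 1) / dl).
  pose N := maxn N0 N1.
  have hA := HN1 N (leq_maxr _ _).
  have := sumbound N.
  rewrite -(big_mkord xpredT (fun i => alpha i * q i)) (@big_cat_nat _ _ _ N0 0 N _ _ (leq0n N0) (leq_maxl N0 N1)) /=.
  move: hA; rewrite /series /= (@big_cat_nat _ _ _ N0 0 N _ _ (leq0n N0) (leq_maxl N0 N1)) /= -/N.
  move=> hA.
  have s1 : 0 <= \sum_(0 <= i < N0) alpha i * q i by apply: sumr_ge0 => i _.
  have s2 : dl * \sum_(N0 <= i < N) alpha i <= \sum_(N0 <= i < N) alpha i * q i.
    rewrite mulr_sumr; apply: ler_sum_nat => i /andP[hi _].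
    rewrite mulrC; apply: ler_wpM2l; [exact: ltW | exact: qd].
  have s3 : (2 * M + K * S2 + 1) <= dl * \sum_(N0 <= i < N) alpha i.
    set X := 2 * M + K * S2 + 1.
    have hX : X / dl <= \sum_(N0 <= i < N) alpha i  by move: hA; rewrite lerD2l.
    have := ler_wpM2l (ltW dl0) hX.
    have -> : dl * (X / dl) = X by field; lra.
    done.
  lra.
have u0 : u @ \oo --> 0 by rewrite -lz.
apply/cvgrPdist_lt => e e0.
have e4 : 0 < e ^+ 4 by apply: exprn_gt0.
apply: (filterS _ (cvgr_lt 0 u0 (e ^+ 4) e4)) => i /= hi.
rewrite sub0r normrN; apply: norm_lt_entries => // j.
have qe : q i < e ^+ 2.
  have hi' : q i ^+ 2 < e ^+ 2 * e ^+ 2 by rewrite -exprD; exact: hi.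
  have := q0 i; have := sqr_ge0 e; nra.
have gq : g i ord0 j ^+ 2 <= q i.
  rewrite /q (bigD1 j) //= lerDl; apply: sumr_ge0 => k _; exact: sqr_ge0.
rewrite -/(g i); have := normr_ge0 (g i ord0 j); have := sqr_norm (g i ord0 j).
nra.
Qed.
End Conv.
Section MDP.
Variables (R : realType) (S A : finType) (n T : nat).

Lemma is_derive_fsum (I : finType) (h : I -> 'rV[R]_n -> R) x v (dh : I -> R) :
  (forall i, is_derive x v (h i) (dh i)) ->
  is_derive x v (fun y => \sum_i h i y) (\sum_i dh i).
Proof.
move=> H.
have -> : (fun y => \sum_i h i y) = \sum_i h i by apply/funext => y; rewrite fct_sumE.
elim/big_ind2 : _ => //; first exact: is_derive_cst.
by move=> ? ? ? ? ? ?; exact: is_deriveD.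
Qed.

Lemma is_deriveMf (f g : 'rV[R]_n -> R) x v df dg : is_derive x v f df ->
  is_derive x v g dg -> is_derive x v (fun y => f y * g y) (f x * dg + df * g x).
Proof.
move=> Hf Hg; have := is_deriveM Hf Hg.
by rewrite [g x *: df]mulrC.
Qed.

Lemma is_deriveDf (f g : 'rV[R]_n -> R) x v df dg : is_derive x v f df ->
  is_derive x v g dg -> is_derive x v (fun y => f y + g y) (df + dg).
Proof. by move=> Hf Hg; have := is_deriveD Hf Hg. Qed.

Lemma is_deriveCf (c : R) (f : 'rV[R]_n -> R) x v df : is_derive x v f df ->
  is_derive x v (fun y => c * f y) (c * df).
Proof. by move=> Hf; have := is_deriveZ c Hf. Qed.

Lemma glnpi (f : 'rV[R]_n -> R) th j : differentiable f th -> 0 < f th ->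
  grad (fun th' => ln (f th')) th ord0 j = 'D_(delta_mx 0 j) f th / f th.
Proof.
move=> df f0; rewrite /grad mxE.
have dl : differentiable (@ln R) (f th).
  by apply/derivable1_diffP; exact: (@ex_derive _ _ _ _ _ _ _ (is_derive1_ln f0)).
have -> : (fun th' => ln (f th')) = (@ln R) \o f by [].
rewrite deriveE; last exact: differentiable_comp.
rewrite diff_comp // /= deriv1E; last exact/derivable1_diffP.
rewrite derive1E (@derive_val _ _ _ _ _ _ _ (is_derive1_ln f0)) -deriveE //.
Qed.

Variables (P : S -> A -> S -> R) (r : S -> A -> S -> R) (d0 : S -> R)
  (pi : 'rV[R]_n -> S -> A -> R).
Hypotheses (P0 : forall s a s', 0 <= P s a s')
  (P1 : forall s a, \sum_(s' : S) P s a s' = 1)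
  (d00 : forall s, 0 <= d0 s) (d01 : \sum_(s : S) d0 s = 1)
  (pi0 : forall th s a, 0 < pi th s a)
  (pi1 : forall th s, \sum_(a : A) pi th s a = 1).

Local Notation mu th t s := (state_dist P d0 pi th t s).

Lemma mu_ge0 th t s : 0 <= mu th t s.
Proof.
elim: t s => [|t IH] s /=; first exact: d00.
apply: sumr_ge0 => s0 _; apply: sumr_ge0 => a0 _.
by apply: mulr_ge0; [apply: mulr_ge0; [exact: IH | exact: ltW] | exact: P0].
Qed.

Lemma one_step th (Y : S -> R) t :
  \sum_(s : S) mu th t s * (\sum_(a : A) pi th s a * \sum_(s' : S) P s a s' * Y s') =
  \sum_(s' : S) mu th t.+1 s' * Y s'.
Proof.
transitivity (\sum_(s : S) \sum_(a : A) \sum_(s' : S)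
    mu th t s * pi th s a * P s a s' * Y s').
  apply: eq_bigr => s _; rewrite mulr_sumr; apply: eq_bigr => a _.
  rewrite mulr_sumr mulr_sumr; apply: eq_bigr => s' _; ring.
rewrite /= [RHS](eq_bigr (fun s' => \sum_(s : S) \sum_(a : A)
    mu th t s * pi th s a * P s a s' * Y s')); last first.
  by move=> s' _; rewrite mulr_suml; apply: eq_bigr => s _; rewrite mulr_suml.
rewrite [RHS]exchange_big /=; apply: eq_bigr => s _.
by rewrite [RHS]exchange_big.
Qed.

Lemma mu_sum th t : \sum_(s : S) mu th t s = 1.
Proof.
elim: t => [|t IH]; first exact: d01.
transitivity (\sum_(s' : S) mu th t.+1 s' * 1).
  by apply: eq_bigr => s _; rewrite mulr1.
rewrite -one_step -[RHS]IH; apply: eq_bigr => s _.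
rewrite -[RHS]mulr1; congr (_ * _); rewrite -[in RHS](pi1 th s).
apply: eq_bigr => a _.
under eq_bigr do rewrite mulr1.
by rewrite P1 mulr1.
Qed.

Lemma mu_le1 th t s : mu th t s <= 1.
Proof.
rewrite -(mu_sum th t) (bigD1 s) //= lerDl.
by apply: sumr_ge0 => s0 _; exact: mu_ge0.
Qed.

Lemma telescope th (X : nat -> S -> R) (f : nat -> S -> A -> R) :
  (forall k s, X k.+1 s =
     \sum_(a : A) (f k s a + pi th s a * \sum_(s' : S) P s a s' * X k s')) ->
  forall j t, \sum_(s : S) mu th t s * X j s =
   \sum_(i < j) \sum_(s : S) mu th (t + i)%N s * \sum_(a : A) f (j - i.+1)%N s a
   + \sum_(s : S) mu th (t + j)%N s * X 0%N s.
Proof.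
move=> HX; elim=> [|j IH] t.
  by rewrite big_ord0 add0r addn0.
have E : \sum_(s : S) mu th t s * X j.+1 s =
    \sum_(s : S) mu th t s * \sum_(a : A) f j s a + \sum_(s : S) mu th t.+1 s * X j s.
  rewrite -one_step -big_split /=; apply: eq_bigr => s _.
  by rewrite HX big_split /= mulrDr.
rewrite E IH big_ord_recl addn0 subSS subn0 addrA; congr (_ + _ + _).
  apply: eq_bigr => i _.
  rewrite lift0.
  by rewrite addSnnS subSS.
by rewrite addSnnS.
Qed.

Definition Wv k th g s := \sum_(a : A) pi th s a * Qsteps P r pi k th g s a.
Definition rho s a := \sum_(s' : S) P s a s' * r s a s'.

Lemma Wv_rec th k s : Wv k.+1 th 1 s =
  \sum_(a : A) (pi th s a * rho s a + pi th s a * \sum_(s' : S) P s a s' * Wv k th 1 s').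
Proof.
rewrite /Wv /=; apply: eq_bigr => a _; rewrite -mulrDr; congr (_ * _).
rewrite /rho -big_split; apply: eq_bigr => s' _ /=.
by rewrite mul1r mulrDr.
Qed.

Lemma Wv0 th g s : Wv 0 th g s = 0.
Proof. by rewrite /Wv big1 // => a _; rewrite mulr0. Qed.

Variable sterm : S.
Hypotheses (Pterm : forall a, P sterm a sterm = 1)
  (rterm : forall a, r sterm a sterm = 0)
  (muT : forall th, mu th T sterm = 1).

Lemma P_term a s' : s' != sterm -> P sterm a s' = 0.
Proof.
move=> ns.
have H : \sum_(s0 | s0 != sterm) P sterm a s0 = 0.
  by have := P1 sterm a; rewrite (bigD1 sterm) //= Pterm; lra.
exact: (psumr_eq0P (fun i _ => P0 _ _ _) H).
Qed.

Lemma rho_term a : rho sterm a = 0.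
Proof.
rewrite /rho (bigD1 sterm) //= rterm mulr0 add0r big1 // => s' ns.
by rewrite P_term // mul0r.
Qed.

Lemma mu_term th s : s != sterm -> mu th T s = 0.
Proof.
move=> ns.
have H : \sum_(s0 | s0 != sterm) mu th T s0 = 0.
  by have := mu_sum th T; rewrite (bigD1 sterm) //= muT; lra.
exact: (psumr_eq0P (fun i _ => mu_ge0 _ _ _) H).
Qed.

Lemma sum_mu_T th (F : S -> R) : \sum_(s : S) mu th T s * F s = F sterm.
Proof.
rewrite (bigD1 sterm) //= muT mul1r big1 ?addr0 // => s ns.
by rewrite mu_term // mul0r.
Qed.

Lemma J_W th : Jobj T P r d0 pi th = \sum_(s : S) d0 s * Wv T.+1 th 1 s.
Proof.
have := telescope (X := fun k s => Wv k th 1 s) (f := fun k s a => pi th s a * rho s a)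
  (fun k s => Wv_rec th k s) T.+1 0.
move=> ->.
rewrite [X in _ + X]big1 ?addr0; last by move=> s _; rewrite Wv0 mulr0.
rewrite big_ord_recr /= add0n sum_mu_T [X in _ + X]big1 ?addr0; last first.
  by move=> a _; rewrite rho_term mulr0.
rewrite /Jobj; apply: eq_bigr => t _; rewrite add0n; apply: eq_bigr => s _.
rewrite mulr_sumr; apply: eq_bigr => a _; rewrite /rho !mulr_sumr.
by apply: eq_bigr => s' _; rewrite !mulrA.
Qed.

Lemma avg_bound (I : finType) (w X : I -> R) c : (forall i, 0 <= w i) ->
  \sum_i w i = 1 -> (forall i, `|X i| <= c) -> `|\sum_i w i * X i| <= c.
Proof.
move=> w0 w1 Xc; apply: le_trans (ler_norm_sum _ _ _) _.
rewrite -[leRHS]mul1r -w1 mulr_suml; apply: ler_sum => i _.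
by rewrite normrM ger0_norm // ler_wpM2l.
Qed.

Variable Rmax : R.
Hypotheses (Hr : forall s a s', `|r s a s'| <= Rmax) (Rmax0 : 0 <= Rmax).

Lemma Q_bound th g k s a : 0 <= g <= 1 ->
  `|Qsteps P r pi k th g s a| <= k%:R * Rmax.
Proof.
move=> /andP[g0 g1]; elim: k s a => [|k IH] s a; first by rewrite /= normr0 mul0r.
rewrite /=; apply: avg_bound => //.
move=> s'; apply: le_trans (ler_normD _ _) _.
rewrite -natr1 mulrDl mul1r addrC; apply: lerD => //.
rewrite normrM (ger0_norm g0) -[leRHS]mul1r; apply: ler_pM => //.
apply: avg_bound => // a'; exact: ltW.
Qed.

Lemma W_bound th g k s : 0 <= g <= 1 -> `|Wv k th g s| <= k%:R * Rmax.
Proof.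
move=> hg; apply: avg_bound => // a; [exact: ltW | exact: Q_bound].
Qed.

Lemma Q_diff th g k s a : 0 <= g <= 1 ->
  `|Qsteps P r pi k th 1 s a - Qsteps P r pi k th g s a| <= k%:R ^+ 2 * Rmax * (1 - g).
Proof.
move=> hg; have /andP[g0 g1] := hg.
elim: k s a => [|k IH] s a; first by rewrite /= subrr normr0 expr2 !mul0r.
rewrite /= -sumrB.
have -> : \sum_s' (P s a s' * (r s a s' + 1 * \sum_a' pi th s' a' * Qsteps P r pi k th 1 s' a') -
     P s a s' * (r s a s' + g * \sum_a' pi th s' a' * Qsteps P r pi k th g s' a')) =
   \sum_s' P s a s' * \sum_a' pi th s' a' * ((Qsteps P r pi k th 1 s' a' - Qsteps P r pi k th g s' a')
        + (1 - g) * Qsteps P r pi k th g s' a').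
  apply: eq_bigr => s' _; rewrite -mulrBr; congr (_ * _).
  have E : forall a', pi th s' a' * (Qsteps P r pi k th 1 s' a' - Qsteps P r pi k th g s' a'
        + (1 - g) * Qsteps P r pi k th g s' a') =
      pi th s' a' * Qsteps P r pi k th 1 s' a' - g * (pi th s' a' * Qsteps P r pi k th g s' a').
    by move=> a'; ring.
  rewrite (eq_bigr _ (fun a' _ => E a')) sumrB -mulr_sumr mul1r; ring.
apply: avg_bound => // s'; apply: avg_bound => // [a'|a']; first exact: ltW.
apply: le_trans (ler_normD _ _) _.
have h1 := IH s' a'.
have h2 : `|(1 - g) * Qsteps P r pi k th g s' a'| <= (1 - g) * (k%:R * Rmax).
  by rewrite normrM ger0_norm ?subr_ge0 // ler_wpM2l ?subr_ge0 // Q_bound.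
apply: le_trans (lerD h1 h2) _.
have k0 : 0 <= k%:R :> R by [].
have hR : 0 <= Rmax * (1 - g) by apply: mulr_ge0 => //; rewrite subr_ge0.
rewrite -natr1; set x := k%:R in k0 *; set y := 1 - g in hR *.
nra.
Qed.

Hypothesis dpi : forall s a th, differentiable (fun th' => pi th' s a) th.

Fixpoint DWf th v k s : R :=
  match k with
  | 0 => 0
  | k'.+1 => \sum_(a : A) ('D_v (fun th' => pi th' s a) th * Qsteps P r pi k'.+1 th 1 s a
              + pi th s a * \sum_(s' : S) P s a s' * DWf th v k' s')
  end.

Lemma W_is_derive th v k s :
  is_derive th v (fun th' => Wv k th' 1 s) (DWf th v k s).
Proof.
elim: k s => [|k IH] s.
  have -> : (fun th' => Wv 0 th' 1 s) = cst 0 by apply/funext => th'; rewrite Wv0.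
  exact: is_derive_cst.
have -> : (fun th' => Wv k.+1 th' 1 s) = (fun th' => \sum_(a : A) pi th' s a *
    \sum_(s' : S) P s a s' * (r s a s' + 1 * Wv k th' 1 s')) by [].
apply: is_derive_eq.
  apply: is_derive_fsum => a; apply: is_deriveMf.
    by apply: derivableP; apply: diff_derivable; exact: dpi.
  apply: is_derive_fsum => s'; apply: is_deriveCf; apply: is_deriveDf.
rewrite /=; apply: eq_bigr => a _; rewrite addrC; congr (_ + _).
congr (_ * _); apply: eq_bigr => s' _ /=; by rewrite add0r scale1r.
Qed.

Lemma Q1_rho th g s a : Qsteps P r pi 1 th g s a = rho s a.
Proof.
rewrite /= /rho; apply: eq_bigr => s' _.
by rewrite big1 ?mulr0 ?addr0 // => a' _; rewrite mulr0.
Qed.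

Lemma gradhat_entry th g j : gradhat T P r d0 pi th g ord0 j =
  \sum_(t < T) \sum_(s : S) \sum_(a : A) mu th t s * pi th s a *
     Qgamma T P r pi th g t s a * grad (fun th' => ln (pi th' s a)) th ord0 j.
Proof.
rewrite /gradhat summxE; apply: eq_bigr => t _; rewrite summxE.
apply: eq_bigr => s _; rewrite summxE; apply: eq_bigr => a _.
by rewrite !mxE.
Qed.

Lemma PGT th j : grad (Jobj T P r d0 pi) th ord0 j =
  \sum_(t < T) \sum_(s : S) \sum_(a : A) mu th t s * pi th s a *
     Qgamma T P r pi th 1 t s a * grad (fun th' => ln (pi th' s a)) th ord0 j.
Proof.
rewrite /grad mxE.
set v := delta_mx 0 j.
have -> : Jobj T P r d0 pi = fun th' => \sum_(s : S) d0 s * Wv T.+1 th' 1 s.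
  by apply/funext => th'; rewrite J_W.
have D : is_derive th v (fun th' => \sum_(s : S) d0 s * Wv T.+1 th' 1 s)
    (\sum_(s : S) d0 s * DWf th v T.+1 s).
  apply: is_derive_fsum => s; apply: is_deriveCf; exact: W_is_derive.
rewrite (@derive_val _ _ _ _ _ _ _ D).
have := telescope (X := fun k s => DWf th v k s)
  (f := fun k s a => 'D_v (fun th' => pi th' s a) th * Qsteps P r pi k.+1 th 1 s a)
  (fun k s => erefl) T.+1 0.
move=> ->.
rewrite [X in _ + X]big1 ?addr0; last by move=> s _; rewrite mulr0.
rewrite big_ord_recr /= add0n sum_mu_T [X in _ + X]big1 ?addr0; last first.
  move=> a _; have := Q1_rho th 1 sterm a; rewrite rho_term => E.
  by rewrite subnn -[X in _ * X]/(Qsteps P r pi 1 th 1 sterm a) E mulr0.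
apply: eq_bigr => t _; rewrite add0n; apply: eq_bigr => s _.
rewrite mulr_sumr; apply: eq_bigr => a _.
rewrite glnpi // /Qgamma subSS.
have := pi0 th s a; rewrite lt0r => /andP[pn _].
rewrite -[X in _ * (_ * X) = _]/(Qsteps P r pi (T - t).+1 th 1 s a).
by field.
Qed.

Variable Lpi : R.
Hypotheses (HLpi : forall th s a, `|grad (fun th' => ln (pi th' s a)) th| <= Lpi)
  (Lpi0 : 0 <= Lpi).

Lemma inner_avg th t (X : S -> A -> R) c : (forall s a, `|X s a| <= c) ->
  `|\sum_(s : S) \sum_(a : A) mu th t s * pi th s a * X s a| <= c.
Proof.
move=> Xc.
have -> : \sum_(s : S) \sum_(a : A) mu th t s * pi th s a * X s a =
    \sum_(s : S) mu th t s * \sum_(a : A) pi th s a * X s a.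
  by apply: eq_bigr => s _; rewrite mulr_sumr; apply: eq_bigr => a _; rewrite mulrA.
apply: avg_bound; [exact: mu_ge0 | exact: mu_sum |] => s.
apply: avg_bound => // a; exact: ltW.
Qed.

Lemma outer_sum (Y : 'I_T -> R) c : (forall t, `|Y t| <= c) ->
  `|\sum_(t < T) Y t| <= T%:R * c.
Proof.
move=> Yc; apply: le_trans (ler_norm_sum _ _ _) _.
have -> : T%:R * c = \sum_(t < T) c by rewrite sumr_const card_ord mulr_natl.
by apply: ler_sum => t _.
Qed.

Lemma Qg_bound th g (t : 'I_T) s a : 0 <= g <= 1 ->
  `|Qgamma T P r pi th g t s a| <= T.+1%:R * Rmax.
Proof.
move=> hg; apply: le_trans (@Q_bound th g (T - t).+1 s a hg) _.
by apply: ler_wpM2r => //; rewrite ler_nat ltnS leq_subr.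
Qed.

Lemma Qg_diff th g (t : 'I_T) s a : 0 <= g <= 1 ->
  `|Qgamma T P r pi th 1 t s a - Qgamma T P r pi th g t s a| <=
     T.+1%:R ^+ 2 * Rmax * (1 - g).
Proof.
move=> hg; have /andP[_ g1] := hg; apply: le_trans (@Q_diff th g (T - t).+1 s a hg) _.
rewrite -!mulrA.
have h : (T - t).+1%:R <= T.+1%:R :> R by rewrite ler_nat ltnS leq_subr.
rewrite mulrA [in leRHS]mulrA; apply: ler_wpM2r; first by apply: mulr_ge0 => //; rewrite subr_ge0.
by apply: ler_pM.
Qed.

Definition Gc := T%:R * (T.+1%:R * Rmax * Lpi).
Definition Bc := T%:R * (T.+1%:R ^+ 2 * Rmax * Lpi).

Lemma Gc0 : 0 <= Gc.
Proof. by rewrite /Gc; apply: mulr_ge0 => //; apply: mulr_ge0 => //; apply: mulr_ge0. Qed.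

Lemma gl_bound th s a j : `|grad (fun th' => ln (pi th' s a)) th ord0 j| <= Lpi.
Proof. exact: le_trans (entry_le_norm _ _) (HLpi _ _ _). Qed.

Lemma gradhat_bound th g : 0 <= g <= 1 -> `|gradhat T P r d0 pi th g| <= Gc.
Proof.
move=> hg; apply: norm_le_entries; first exact: Gc0.
move=> j; rewrite gradhat_entry; apply: outer_sum => t.
under eq_bigr do under eq_bigr do rewrite -mulrA.
apply: inner_avg => s a; rewrite normrM; apply: ler_pM => //.
  exact: Qg_bound.
exact: gl_bound.
Qed.

Lemma gradJ_bound th : `|grad (Jobj T P r d0 pi) th| <= Gc.
Proof.
apply: norm_le_entries; first exact: Gc0.
move=> j; rewrite PGT; apply: outer_sum => t.
under eq_bigr do under eq_bigr do rewrite -mulrA.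
apply: inner_avg => s a; rewrite normrM; apply: ler_pM => //.
  by apply: Qg_bound; rewrite ler01 lexx.
exact: gl_bound.
Qed.

Lemma bias th g : 0 <= g <= 1 ->
  `|gradhat T P r d0 pi th g - grad (Jobj T P r d0 pi) th| <= Bc * (1 - g).
Proof.
move=> hg; have /andP[_ g1] := hg.
apply: norm_le_entries.
  rewrite /Bc; apply: mulr_ge0; last by rewrite subr_ge0.
  by apply: mulr_ge0 => //; apply: mulr_ge0 => //; apply: mulr_ge0 => //; exact: sqr_ge0.
move=> j; rewrite entry_sub gradhat_entry PGT -sumrB.
have -> : Bc * (1 - g) = T%:R * (T.+1%:R ^+ 2 * Rmax * (1 - g) * Lpi).
  by rewrite /Bc; ring.
apply: outer_sum => t; rewrite -sumrB.
under eq_bigr do rewrite -sumrB.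
have E : forall s a,
  mu th t s * pi th s a * Qgamma T P r pi th g t s a *
     grad (fun th' => ln (pi th' s a)) th ord0 j -
  mu th t s * pi th s a * Qgamma T P r pi th 1 t s a *
     grad (fun th' => ln (pi th' s a)) th ord0 j =
  mu th t s * pi th s a * ((Qgamma T P r pi th g t s a - Qgamma T P r pi th 1 t s a) *
     grad (fun th' => ln (pi th' s a)) th ord0 j) by move=> s a; ring.
under eq_bigr do under eq_bigr do rewrite E.
apply: inner_avg => s a; rewrite normrM; apply: ler_pM => //.
  by rewrite distrC; exact: Qg_diff.
exact: gl_bound.
Qed.

Lemma mdp_facts :
  (forall th, `|Jobj T P r d0 pi th| <= T.+1%:R * Rmax) /\
  (forall th, `|grad (Jobj T P r d0 pi) th| <= Gc) /\
  (forall th g, 0 <= g <= 1 -> `|gradhat T P r d0 pi th g| <= Gc) /\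
  (forall th g, 0 <= g <= 1 ->
     `|gradhat T P r d0 pi th g - grad (Jobj T P r d0 pi) th| <= Bc * (1 - g)).
Proof.
split.
  move=> th; rewrite J_W; apply: avg_bound => // s.
  by apply: W_bound; rewrite ler01 lexx.
split; first exact: gradJ_bound.
split; first exact: gradhat_bound.
exact: bias.
Qed.

End MDP.

Unset Implicit Arguments.

Theorem theorem2 (R : realType) (S A : finType) (n T : nat)
  (P : S -> A -> S -> R) (r : S -> A -> S -> R) (Rmax : R) (d0 : S -> R)
  (sterm : S) (pi : 'rV[R]_n -> S -> A -> R) (Lpi : R)
  (alpha gamma : nat -> R) (c : R) (theta : nat -> 'rV[R]_n) :
  (* finite episodic MDP *)
  (forall s a s', 0 <= P s a s') ->
  (forall s a, \sum_(s' : S) P s a s' = 1) ->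
  (forall s, 0 <= d0 s) -> \sum_(s : S) d0 s = 1 ->
  (forall s a s', `|r s a s'| <= Rmax) ->
  (* terminal absorbing state with reward 0, reached at time T *)
  (forall a, P sterm a sterm = 1) ->
  (forall a, r sterm a sterm = 0) ->
  (forall th, state_dist P d0 pi th T sterm = 1) ->
  (* parameterized policy *)
  (forall th s a, 0 < pi th s a) ->
  (forall th s, \sum_(a : A) pi th s a = 1) ->
  (forall s a th, differentiable (fun th' => pi th' s a) th) ->
  (forall th s a, `|grad (fun th' => ln (pi th' s a)) th| <= Lpi) ->
  (* J is continuously differentiable with Lipschitz gradient *)
  (forall th, differentiable (Jobj T P r d0 pi) th) ->
  continuous (grad (Jobj T P r d0 pi)) ->
  (exists L : R, forall th th',
      `|grad (Jobj T P r d0 pi) th - grad (Jobj T P r d0 pi) th'|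
        <= L * `|th - th'|) ->
  (* iteration and step-size conditions *)
  (forall i, theta i.+1 = theta i + alpha i *: gradhat T P r d0 pi (theta i) (gamma i)) ->
  (forall i, 0 < alpha i) ->
  (forall i, 0 <= gamma i <= 1) ->
  [series alpha i]_i @ \oo --> +oo ->
  cvg ([series alpha i ^+ 2]_i @ \oo) ->
  0 < c ->
  (forall i, c * (1 - gamma i) <= alpha i) ->
  (exists Jl : R, Jobj T P r d0 pi (theta i) @[i --> \oo] --> Jl) /\
  (grad (Jobj T P r d0 pi) (theta i) @[i --> \oo] --> (0 : 'rV[R]_n)) /\
  (forall th, cluster (theta @ \oo) th -> grad (Jobj T P r d0 pi) th = 0).
Proof.
move=> P0 P1 d00 d01 Hr Pterm rterm muT pi0 pi1 dpi HLpi dJ cgrad [L HL] Hth a0 g01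
  adiv a2cv c0 Hc.
have Hr' : forall s a s', `|r s a s'| <= `|Rmax|.
  by move=> s a s'; apply: le_trans (Hr s a s') (ler_norm _).
have HLpi' : forall th s a, `|grad (fun th' => ln (pi th' s a)) th| <= `|Lpi|.
  by move=> th s a; apply: le_trans (HLpi th s a) (ler_norm _).
have [Jb [gJb [ghb bb]]] := mdp_facts P0 P1 d00 d01 pi0 pi1 Pterm rterm muT Hr'
  (normr_ge0 _) dpi HLpi' (normr_ge0 _).
set J := Jobj T P r d0 pi in Jb gJb bb dJ cgrad HL *.
have Bc0 : 0 <= Bc T `|Rmax| `|Lpi|.
  rewrite /Bc; apply: mulr_ge0 => //; apply: mulr_ge0 => //; apply: mulr_ge0 => //.
have Hb : forall i, `|gradhat T P r d0 pi (theta i) (gamma i) - grad J (theta i)| <=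
    Bc T `|Rmax| `|Lpi| / c * alpha i.
  move=> i; apply: le_trans (bb _ _ (g01 i)) _.
  rewrite -mulrA; apply: ler_wpM2l => //.
  by rewrite mulrC ler_pdivlMr // mulrC.
have [Jcv gcv] := abstract_conv dJ HL Jb gJb (fun i => ghb _ _ (g01 i))
  Hb Hth a0 adiv a2cv.
split; first by exists (limn (fun i => J (theta i))).
split; first exact: gcv.
move=> th Hcl.
apply/eqP; rewrite -normr_le0 leNgt; apply/negP => hpos.
set e := `|grad J th| / 2.
have e0 : 0 < e by rewrite /e divr_gt0.
have nA : (theta @ \oo) [set x | `|grad J x| < e].
  have H := proj1 (cvgrPdist_lt _ _) gcv e e0.
  suff : \forall i \near \oo, `|grad J (theta i)| < e by [].
  near=> i; have : `|0 - grad J (theta i)| < e by near: i; exact: H.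
  by rewrite sub0r normrN.
have nB : nbhs th [set x | `|grad J th - grad J x| < e].
  exact: (proj1 (cvgrPdist_lt _ _) (cgrad th) e e0).
have [x [/= h1 h2]] := Hcl _ _ nA nB.
have : `|grad J th| < e + e.
  apply: le_lt_trans (_ : `|grad J th - grad J x| + `|grad J x| < e + e); last first.
    exact: ltrD.
  by rewrite -{1}(subrK (grad J x) (grad J th)) ler_normD.
rewrite /e; lra.
Unshelve. all: by end_near.
Qed.
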